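(* Let $n\ge 1$, let $Q_n$ be the universal algebra of pseudo-roots, and let $\Gamma_n$ be the graph of subsets of $\{1,\dots,n\}$ (both defined in the context). Let $Z=\{x_{A_1,i_1},x_{A_2,i_2},\dots,x_{A_n,i_n}\}\subseteq Q_n$ be a set of pseudo-roots such that $i_1,i_2,\dots,i_n$ are pairwise distinct. If the set of edges $\{(A_1,i_1),(A_2,i_2),\dots,(A_n,i_n)\}$ of $\Gamma_n$ is connected, then $Z$ is a sufficient set, i.e. the $du$-envelope of $Z$ contains a defining set of pseudo-roots of $\mathcal P(t)$.
   Context: Fix a field $k$. The algebra $Q_n$ is the associative unital $k$-algebra with generators $x_{A,i}$, where $A\subseteq\{1,\dots,n\}$ and $i\in\{1,\dots,n\}\setminus A$ (these generators are called pseudo-roots), subject to the relations $x_{A\cup\{i\},j}+x_{A,i}=x_{A\cup\{j\},i}+x_{A,j}$ and $x_{A\cup\{i\},j}\,x_{A,i}=x_{A\cup\{j\},i}\,x_{A,j}$ for all $A\subseteq\{1,\dots,n\}$ and all $i\ne j$ with $i,j\notin A$. Let $t$ be a central indeterminate. For an ordering $(i_1,\dots,i_n)$ of $\{1,\dots,n\}$ put $A_1=\emptyset$, $A_k=\{i_1,\dots,i_{k-1}\}$, and $\mathcal P(t)=(t-x_{A_n,i_n})(t-x_{A_{n-1},i_{n-1}})\cdots(t-x_{A_1,i_1})\in Q_n[t]$; this polynomial is independent of the ordering. A set $Y$ of pseudo-roots is a defining set if $\mathcal P(t)=(t-y_n)(t-y_{n-1})\cdots(t-y_1)$ for some $y_1,\dots,y_n\in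 Y$. The graph $\Gamma_n$ has as vertices all subsets of $\{1,\dots,n\}$ and as edges the pairs $(A,i)$ with $i\notin A$; the edge $(A,i)$ has tail $A\cup\{i\}$ and head $A$ (it corresponds to the pseudo-root $x_{A,i}$). Operations on pseudo-roots: for two distinct pseudo-roots $x_{A,i},x_{B,j}$ whose edges have a common head ($A=B$), a pseudo-root $\xi$ is obtained from the ordered pair $(x_{A,i},x_{B,j})$ by the $u$-operation if $(x_{A,i}-x_{B,j})x_{A,i}=\xi(x_{A,i}-x_{B,j})$; for two distinct pseudo-roots whose edges have a common tail ($A\cup\{i\}=B\cup\{j\}$), a pseudo-root $\eta$ is obtained from the ordered pair $(x_{A,i},x_{B,j})$ by the $d$-operation if $(x_{A,i}-x_{B,j})\eta=x_{A,i}(x_{A,i}-x_{B,j})$. The $du$-envelope of a set $Z$ of pseudo-roots is the set of pseudo-roots obtainable from elements of $Z$ by successive applications of $d$- and $u$-operations (including $Z$ itself). $Z$ is sufficient if its $du$-envelope contains a defining set. A set $G$ of edges is connected if the undirected graph whose vertices are the heads and tails of edges of $G$ and whose edges are the edges of $G$ (directions forgotten) is connected. *)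

(* Defs.v *)
From HB Require Import structures.
From mathcomp Require Import all_boot all_order all_algebra.
Set Implicit Arguments. Unset Strict Implicit. Unset Printing Implicit Defensive.
Import GRing.Theory.
Local Open Scope ring_scope.

(* {1,...,n} is represented by 'I_n; subsets by {set 'I_n}.
   A pseudo-root index is a pair (A, i) with i \notin A; the pseudo-root
   x_{A,i} is then x A i. *)
Definition pr (n : nat) := ({set 'I_n} * 'I_n)%type.

Definition valid_pr n (p : pr n) : bool := p.2 \notin p.1.

Definition Qn_rel (k : fieldType) (n : nat) (R : algType k)
    (x : {set 'I_n} -> 'I_n -> R) : Prop :=
  forall (A : {set 'I_n}) (i j : 'I_n), i != j -> i \notin A -> j \notin A ->
    x (i |: A) j + x A i = x (j |: A) i + x A j /\
    x (i |: A) j * x A i = x (j |: A) i * x A j.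

(* An identity between expressions in the generators holds in Q_n iff it
   holds for every k-algebra and every family satisfying the relations
   (universal property of Q_n, which is itself a nonzero k-algebra). *)
Definition holds_in_Qn (k : fieldType) (n : nat)
    (E : forall R : algType k, ({set 'I_n} -> 'I_n -> R) -> Prop) : Prop :=
  forall (R : algType k) (x : {set 'I_n} -> 'I_n -> R), Qn_rel x -> E R x.

Definition xp n (R : Type) (x : {set 'I_n} -> 'I_n -> R) (p : pr n) : R :=
  x p.1 p.2.

Definition u_op (k : fieldType) n (a b c : pr n) : Prop :=
  [/\ valid_pr a && valid_pr b && valid_pr c, a != b, a.1 = b.1 &
    (@holds_in_Qn k n (fun R x =>
      (xp x a - xp x b) * xp x a = xp x c * (xp x a - xp x b)))].

Definition d_op (k : fieldType) n (a b c : pr n) : Prop :=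
  [/\ valid_pr a && valid_pr b && valid_pr c, a != b, a.2 |: a.1 = b.2 |: b.1 &
    (@holds_in_Qn k n (fun R x =>
      (xp x a - xp x b) * xp x c = xp x a * (xp x a - xp x b)))].

Inductive du_envelope (k : fieldType) n (Z : {set pr n}) : pr n -> Prop :=
  | env_base p : p \in Z -> du_envelope k Z p
  | env_u a b c : du_envelope k Z a -> du_envelope k Z b -> u_op k a b c ->
      du_envelope k Z c
  | env_d a b c : du_envelope k Z a -> du_envelope k Z b -> d_op k a b c ->
      du_envelope k Z c.

(* The polynomial P(t) in Q_n[t] computed with the ordering (1,...,n):
   P(t) = (t - x_{A_n,n}) ... (t - x_{A_1,1}), A_m = {1,...,m-1}. *)
Definition prefix_set n (m : 'I_n) : {set 'I_n} := [set j : 'I_n | (j < m)%N].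

Definition Ppoly n (R : nzRingType) (x : {set 'I_n} -> 'I_n -> R) : {poly R} :=
  \prod_(m < n) ('X - (x (prefix_set (rev_ord m)) (rev_ord m))%:P).

Definition defining_set (k : fieldType) n (Y : {set pr n}) : Prop :=
  (forall p, p \in Y -> valid_pr p) /\
  exists y : 'I_n -> pr n, (forall m, y m \in Y) /\
    @holds_in_Qn k n (fun R x =>
      Ppoly x = \prod_(m < n) ('X - (xp x (y (rev_ord m)))%:P)).

Definition sufficient (k : fieldType) n (Z : {set pr n}) : Prop :=
  exists Y : {set pr n}, (forall p, p \in Y -> du_envelope k Z p) /\
    defining_set k Y.

(* Connectedness of a set of edges of Gamma_n given by (A m, i m), m < n:
   the undirected graph on heads and tails with these edges is connected. *)
Definition edge_adj n (A : 'I_n -> {set 'I_n}) (i : 'I_n -> 'I_n)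
    : rel {set 'I_n} :=
  fun u v => [exists m : 'I_n,
    ((u == A m) && (v == i m |: A m)) || ((v == A m) && (u == i m |: A m))].

Definition edge_vertices n (A : 'I_n -> {set 'I_n}) (i : 'I_n -> 'I_n)
    : {set {set 'I_n}} :=
  [set A m | m in 'I_n] :|: [set i m |: A m | m in 'I_n].

Definition edges_connected n (A : 'I_n -> {set 'I_n}) (i : 'I_n -> 'I_n)
    : Prop :=
  forall u v, u \in edge_vertices A i -> v \in edge_vertices A i ->
    connect (edge_adj A i) u v.

(* Main.v *)
Require Import Defs.
From HB Require Import structures.
From mathcomp Require Import all_boot all_order all_algebra.
Set Implicit Arguments. Unset Strict Implicit. Unset Printing Implicit Defensive.
Import GRing.Theory.

Lemma u_step (k : fieldType) n (B : {set 'I_n}) (a b : 'I_n) :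
  a != b -> a \notin B -> b \notin B -> u_op k (B, a) (B, b) (b |: B, a).
Proof.
move=> ab aB bB; split => //.
- by rewrite /valid_pr /= !inE negb_or aB bB ab.
- by rewrite xpair_eqE (negbTE ab) andbF.
move=> R x hx; rewrite /xp /=.
have [hs hp] := hx B a b ab aB bB.
have hd : (x (b |: B) a - x (a |: B) b = x B a - x B b)%R.
  by rewrite -(addrK (x B b) (x (b |: B) a)) -hs addrAC [(x (a |: B) b + _)%R]addrC addrK.
by rewrite mulrBr -hp -mulrBl hd.
Qed.

Lemma d_step (k : fieldType) n (C : {set 'I_n}) (a b : 'I_n) :
  a != b -> a \notin C -> b \notin C -> d_op k (b |: C, a) (a |: C, b) (C, a).
Proof.
move=> ab aC bC; split => //.
- by rewrite /valid_pr /= !inE !negb_or aC bC ab eq_sym ab.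
- by rewrite xpair_eqE (negbTE ab) andbF.
- by rewrite /= setUCA.
move=> R x hx; rewrite /xp /=.
have [hs hp] := hx C a b ab aC bC.
have hd : (x (b |: C) a - x (a |: C) b = x C a - x C b)%R.
  by rewrite -(addrK (x C b) (x (b |: C) a)) -hs addrAC [(x (a |: C) b + _)%R]addrC addrK.
by rewrite mulrBl hp -mulrBr hd.
Qed.

Lemma swapX (R : nzRingType) (c1 c2 c3 c4 : R) :
  (c1 + c2 = c3 + c4)%R -> (c1 * c2 = c3 * c4)%R ->
  (('X - c1%:P) * ('X - c2%:P) = ('X - c3%:P) * ('X - c4%:P))%R.
Proof.
move=> hs hp.
have h : forall a b : R, (('X - a%:P) * ('X - b%:P) =
     'X * 'X - (a + b)%:P * 'X + (a * b)%:P)%R.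
  move=> a b; rewrite mulrBl !mulrBr polyCM polyCD mulrDl.
  rewrite -(commr_polyX b%:P) opprB opprD !addrA.
  by rewrite addrAC; congr (_ + _)%R; rewrite addrAC.
by rewrite !h hs hp.
Qed.

Fixpoint chain n (E : pr n -> Prop) (B : {set 'I_n}) (s : seq 'I_n) : Prop :=
  if s is a :: s' then [/\ a \notin B, E (B, a) & chain E (a |: B) s'] else True.

Fixpoint top n (B : {set 'I_n}) (s : seq 'I_n) : {set 'I_n} :=
  if s is a :: s' then top (a |: B) s' else B.

Fixpoint edges n (B : {set 'I_n}) (s : seq 'I_n) : seq (pr n) :=
  if s is a :: s' then (B, a) :: edges (a |: B) s' else [::].

Lemma topE n (B : {set 'I_n}) s : top B s = B :|: [set x in s].
Proof.
elim: s B => [|a s IH] B /=.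
  by apply/setP=> x; rewrite !inE orbF.
rewrite IH; apply/setP=> x; rewrite !inE.
by case: (x == a); case: (x \in B); case: (x \in s).
Qed.

Lemma top_cat n (B : {set 'I_n}) s t : top B (s ++ t) = top (top B s) t.
Proof. by elim: s B => [|a s IH] B //=. Qed.

Lemma chain_cat n (E : pr n -> Prop) B s t :
  chain E B (s ++ t) <-> chain E B s /\ chain E (top B s) t.
Proof.
elim: s B => [|a s IH] B /=; first by split=> // -[].
split.
  by move=> [h1 h2 /IH [h3 h4]].
by move=> [[h1 h2 h3] h4]; split => //; apply/IH.
Qed.

Lemma chain_uniq n (E : pr n -> Prop) B s :
  chain E B s -> uniq s && all (fun a => a \notin B) s.
Proof.
elim: s B => [|a s IH] B //= [h1 h2 /IH /andP [h3 h4]].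
rewrite h1 h3 /=.
have -> : a \notin s.
  by apply/negP => as_; move/allP: h4 => /(_ a as_); rewrite setU11.
apply/allP => y ys; move/allP: h4 => /(_ y ys); rewrite !inE negb_or.
by case/andP.
Qed.

Lemma chain_edges n (E : pr n -> Prop) B s :
  chain E B s -> forall p, p \in edges B s -> E p /\ valid_pr p.
Proof.
elim: s B => [|a s IH] B //= [h1 h2 h3] p.
rewrite inE => /orP [/eqP -> | /IH]; last exact.
by split.
Qed.

Lemma size_edges n (B : {set 'I_n}) s : size (edges B s) = size s.
Proof. by elim: s B => [|a s IH] B //=; rewrite IH. Qed.

Fixpoint Pch (k : fieldType) n (R : algType k) (x : {set 'I_n} -> 'I_n -> R)
   (B : {set 'I_n}) (s : seq 'I_n) : {poly R} :=
  if s is a :: s' then (Pch x (a |: B) s' * ('X - (x B a)%:P))%R else 1%R.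

Lemma Pch_rcons (k : fieldType) n (R : algType k) (x : {set 'I_n} -> 'I_n -> R) B s a :
  Pch x B (rcons s a) = (('X - (x (top B s) a)%:P) * Pch x B s)%R.
Proof.
elim: s B => [|b s IH] B /=; first by rewrite mul1r mulr1.
by rewrite IH mulrA.
Qed.

Lemma Pch_edges (k : fieldType) n (R : algType k) (x : {set 'I_n} -> 'I_n -> R) B s :
  Pch x B s = (\prod_(p <- rev (edges B s)) ('X - (xp x p)%:P))%R.
Proof.
elim: s B => [|a s IH] B /=; first by rewrite big_nil.
by rewrite IH rev_cons big_rcons.
Qed.

Lemma Pch_perm (k : fieldType) n (R : algType k) (x : {set 'I_n} -> 'I_n -> R) :
  Qn_rel x -> forall (s s' : seq 'I_n) (B : {set 'I_n}), uniq s ->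
  all (fun a => a \notin B) s ->
  perm_eq s s' -> Pch x B s = Pch x B s'.
Proof.
move=> hx s; elim: {s}(size s) {-2}s (leqnn (size s)) => [|N IH] s.
  by case: s => // _ s' B _ _; rewrite perm_sym => /perm_nilP ->.
case: s => [|a r] hsz s' B hu hall hp.
  by move: hp; rewrite perm_sym => /perm_nilP ->.
case: s' hp => [|b r'] hp.
  by move: (perm_size hp).
have hu' : uniq (b :: r') by rewrite -(perm_uniq hp).
move: hu hall => /= /andP [ar ur] /andP [aB hall].
move: hu' => /= /andP [br' ur'].
have szr : size r' = size r by move: (perm_size hp) => /= [->].
case: (eqVneq a b) => [eab | nab].
  rewrite -eab perm_cons in hp; rewrite -eab.
  congr (_ * _)%R; apply: IH => //.
  apply/allP => y yr; rewrite !inE negb_or (allP hall y yr) andbT.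
  by apply: contraNneq ar => <-.
have br : b \in r.
  by move: (perm_mem hp b); rewrite !inE eqxx /= eq_sym (negbTE nab) /= => ->.
have ar' : a \in r'.
  by move: (perm_mem hp a); rewrite !inE eqxx /= (negbTE nab) /= => <-.
set rest := rem b r.
set rest' := rem a r'.
have hr : perm_eq r (b :: rest) by apply: perm_to_rem.
have hr' : perm_eq r' (a :: rest') by apply: perm_to_rem.
have nB : forall y, y \in r' -> y \notin B.
  move=> y yr'; have : y \in a :: r by rewrite (perm_mem hp) inE yr' orbT.
  by rewrite inE => /orP [/eqP -> //| yr]; apply: (allP hall).
have E1 : Pch x (a |: B) r = Pch x (a |: B) (b :: rest).
  apply: IH => //.
  apply/allP => y yr; rewrite !inE negb_or (allP hall y yr) andbT.
  by apply: contraNneq ar => <-.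
have E2 : Pch x (b |: B) r' = Pch x (b |: B) (a :: rest').
  apply: IH => //; first by rewrite szr.
  apply/allP => y yr; rewrite !inE negb_or nB // andbT.
  by apply: contraNneq br' => <-.
have hrest : perm_eq rest rest'.
  have h1 : perm_eq (a :: b :: rest) (b :: a :: rest').
    apply: (perm_trans _ (perm_trans hp _)); first by rewrite perm_cons perm_sym.
    by rewrite perm_cons.
  have h2 : perm_eq (b :: a :: rest') (a :: b :: rest').
    by apply/permP => p /=; rewrite addnCA.
  by move: (perm_trans h1 h2); rewrite !perm_cons.
have E3 : Pch x (b |: (a |: B)) rest = Pch x (b |: (a |: B)) rest'.
  apply: IH => //.
  - by rewrite size_rem // (leq_trans (leq_pred _)).
  - exact: rem_uniq.
  apply/allP => y; rewrite (mem_rem_uniq _ ur) !inE => /andP [yb yr].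
  rewrite negb_or yb /= negb_or (allP hall y yr) andbT.
  by apply: contraNneq ar => <-.
rewrite /= E1 E2 /= E3 setUCA -!mulrA; congr (_ * _)%R.
have [hs hp'] := hx B a b nab aB (allP hall b br).
exact: swapX.
Qed.

Lemma climb (k : fieldType) n (Z : {set pr n}) (l : 'I_n) s V :
  chain (du_envelope k Z) V s -> l \notin V -> l \notin s ->
  du_envelope k Z (V, l) ->
  du_envelope k Z (top V s, l) /\ chain (du_envelope k Z) (l |: V) s.
Proof.
elim: s V => [|a s IH] V //=.
move=> [aV Ea ch] lV; rewrite inE negb_or => /andP [la ls] El.
have Eal : du_envelope k Z (a |: V, l).
  by apply: (env_u El Ea); apply: u_step.
have Ela : du_envelope k Z (l |: V, a).
  by apply: (env_u Ea El); apply: u_step => //; rewrite eq_sym.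
have lV' : l \notin a |: V by rewrite !inE negb_or la lV.
have [h1 h2] := IH _ ch lV' ls Eal.
split => //; split => //.
- by rewrite !inE negb_or eq_sym la aV.
- by rewrite setUCA.
Qed.

Lemma setU1D1 n (V : {set 'I_n}) a l : a != l -> (a |: V) :\ l = a |: (V :\ l).
Proof.
move=> al; apply/setP => y; rewrite !inE.
by case: (eqVneq y a) => [-> | //]; rewrite al.
Qed.

Lemma desc (k : fieldType) n (Z : {set pr n}) (l : 'I_n) s V :
  chain (du_envelope k Z) V s -> l \in V -> l \notin s ->
  du_envelope k Z ((top V s) :\ l, l) ->
  du_envelope k Z (V :\ l, l) /\ chain (du_envelope k Z) (V :\ l) s.
Proof.
elim: s V => [|a s IH] V //=.
move=> [aV Ea ch] lV; rewrite inE negb_or => /andP [la ls] El.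
have lV' : l \in a |: V by rewrite !inE lV orbT.
have [h1 h2] := IH _ ch lV' ls El.
have al : a != l by rewrite eq_sym.
rewrite setU1D1 // in h1 h2.
have lC : l \notin V :\ l by rewrite setD11.
have aC : a \notin V :\ l by rewrite !inE negb_and aV orbT.
have eV : l |: (V :\ l) = V by rewrite setD1K.
have E1 : du_envelope k Z (V :\ l, l).
  apply: (env_d h1 (b := (l |: (V :\ l), a))); first by rewrite eV.
  exact: d_step.
have E2 : du_envelope k Z (V :\ l, a).
  apply: (env_d (a := (l |: (V :\ l), a)) _ h1); first by rewrite eV.
  exact: d_step.
by split => //; split.
Qed.

Lemma topD1 n (B : {set 'I_n}) l s : l \notin s -> top (B :\ l) s = top B s :\ l.
Proof.
move=> ls; rewrite !topE; apply/setP => y; rewrite !inE.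
by case: (eqVneq y l) => [-> | ] /=; [rewrite (negbTE ls) | ].
Qed.

Lemma memS n (s : seq 'I_n) (S : {set 'I_n}) : [set x in s] = S -> forall y, (y \in s) = (y \in S).
Proof. by move=> h y; rewrite -h inE. Qed.

Lemma prod_rev (R : nzRingType) (T : Type) (F : T -> R) (es : seq T) d N :
  size es = N -> (\prod_(m < N) F (nth d es (rev_ord m)) = \prod_(p <- rev es) F p)%R.
Proof.
move=> hs; rewrite (big_nth d) big_mkord size_rev hs; apply: eq_bigr => m _.
by rewrite nth_rev ?hs.
Qed.

Lemma Ppoly_Pch (k : fieldType) n (R : algType k) (x : {set 'I_n.+1} -> 'I_n.+1 -> R) :
  Ppoly x = Pch x set0 [seq inord j | j <- iota 0 n.+1].
Proof.
pose G j := ('X - (x (prefix_set (inord j)) (inord j))%:P)%R.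
have H : forall k0, k0 <= n.+1 ->
    (\prod_(m < k0) G (k0 - m.+1)%N)%R = Pch x set0 [seq inord j | j <- iota 0 k0].
  elim=> [|k0 IH] hk; first by rewrite big_ord0.
  rewrite big_ord_recl.
  have -> : iota 0 k0.+1 = rcons (iota 0 k0) k0 by rewrite -addn1 iotaD cats1.
  rewrite map_rcons Pch_rcons -IH ?(ltnW hk) // subSS subn0.
  congr (_ * _)%R.
    rewrite /G; congr ('X - (x _ _)%:P)%R.
    rewrite topE set0U; apply/setP => j; rewrite !inE (inordK hk).
    apply/idP/idP.
      by move=> hj; apply/mapP; exists (val j); rewrite ?mem_iota ?inord_val.
    by case/mapP => j' hj' ->; rewrite mem_iota /= in hj'; rewrite inordK // (ltn_trans hj').
rewrite /Ppoly -H //; apply: eq_bigr => m _; rewrite /G.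
have -> // : rev_ord m = inord (n.+1 - m.+1).
by apply: val_inj; rewrite /= inordK // subSS ltnS leq_subr.
Qed.

Definition inV n (A : 'I_n -> {set 'I_n}) (i : 'I_n -> 'I_n) (M : {set 'I_n})
  (w : {set 'I_n}) := exists2 m, m \in M & (w = A m \/ w = i m |: A m).

Definition Good (k : fieldType) n (A : 'I_n -> {set 'I_n}) (i : 'I_n -> 'I_n)
   (M : {set 'I_n}) :=
  exists B : {set 'I_n}, (forall x, x \in B -> x \notin i @: M) /\
   forall w, inV A i M w -> exists s1 s2,
     [/\ chain (du_envelope k [set (A m, i m) | m in 'I_n]) B (s1 ++ s2),
         [set x in s1 ++ s2] = i @: M & w = top B s1].

Lemma good1 (k : fieldType) n (A : 'I_n -> {set 'I_n}) (i : 'I_n -> 'I_n) m0 :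
  (forall m, i m \notin A m) -> Good k A i [set m0].
Proof.
move=> hvalid; exists (A m0); rewrite imset_set1; split.
  by move=> x xA; rewrite inE; apply: contraTneq xA => ->.
have hs : [set x in [:: i m0]] = [set i m0] by apply/setP => y; rewrite !inE.
move=> w [m]; rewrite inE => /eqP -> [] ->.
  exists [::], [:: i m0]; split => //=; split => //.
  by apply: env_base; apply/imsetP; exists m0.
exists [:: i m0], [::]; split => //=; split => //.
by apply: env_base; apply/imsetP; exists m0.
Qed.

Lemma good_step (k : fieldType) n (A : 'I_n -> {set 'I_n}) (i : 'I_n -> 'I_n) M m' :
  (forall m, i m \notin A m) -> injective i -> Good k A i M -> m' \notin M ->
  (exists2 v, inV A i M v & (v = A m' \/ v = i m' |: A m')) ->
  Good k A i (m' |: M).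
Proof.
move=> hvalid hinj [B [hB hw]] m'M [v vM vm'].
set E := du_envelope k [set (A m, i m) | m in 'I_n].
have EZ : forall m, E (A m, i m).
  by move=> m; apply: env_base; apply/imsetP; exists m.
set l := i m'.
have lM : l \notin i @: M by rewrite mem_imset.
have [s1v [s2v [chv setv ev]]] := hw v vM.
have ls1 : l \notin s1v.
  by apply: contra lM => h; rewrite -(memS setv) mem_cat h.
have ls2 : l \notin s2v.
  by apply: contra lM => h; rewrite -(memS setv) mem_cat h orbT.
move/chain_cat: chv => [ch1 ch2]; rewrite -ev in ch2.
have imU : i @: (m' |: M) = l |: i @: M by rewrite imsetU1.
have inV' : forall w, inV A i (m' |: M) w ->
    w = A m' \/ w = l |: A m' \/ inV A i M w.
  move=> w [m]; rewrite in_setU1 => /orP [/eqP -> | mM] h.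
    by case: h; auto.
  by right; right; exists m.
have setl : forall s1 s2, [set x in s1 ++ s2] = i @: M ->
    [set x in s1 ++ l :: s2] = i @: (m' |: M).
  move=> s1 s2 hs; rewrite imU; apply/setP => y.
  rewrite !inE -(memS hs) !mem_cat !inE.
  by case: (y == l); case: (y \in s1); case: (y \in s2).
case: vm' => vm'.
- have lv : l \notin v by rewrite vm'; exact: hvalid.
  have lB : l \notin B by apply: contra lv; rewrite ev topE inE => ->.
  have El : E (v, l) by rewrite vm'; exact: EZ.
  have [ctop cup] := climb ch2 lv ls2 El.
  exists B; split.
    move=> x xB; rewrite imU !inE negb_or hB // andbT.
    by apply: contraNneq lB => <-.
  have old : forall w, inV A i M w -> exists s1 s2,
     [/\ chain E B (s1 ++ s2), [set x in s1 ++ s2] = i @: (m' |: M)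
       & w = top B s1].
    move=> w wM; have [s1 [s2 [ch hs ew]]] := hw w wM.
    exists s1, (s2 ++ [:: l]); split => //.
    + rewrite catA; apply/chain_cat; split => //=.
      have tops : top B (s1 ++ s2) = top v s2v.
        by rewrite ev -top_cat !topE hs setv.
      rewrite tops; split => //.
      by rewrite topE !inE negb_or lv ls2.
    + rewrite -(setl _ _ hs); apply/setP => y; rewrite !inE !mem_cat !inE.
      by case: (y == l); case: (y \in s1); case: (y \in s2).
  move=> w /inV' [-> | [-> | wM]]; last exact: old.
    by rewrite -vm'; apply: old.
  exists (s1v ++ [:: l]), s2v; split.
  + rewrite -catA /=; apply/chain_cat; split => //; rewrite -ev /=; split => //.
  + by rewrite -catA /=; apply: setl.
  + by rewrite top_cat -ev vm'.
- have lv : l \in v by rewrite vm' setU11.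
  have lB : l \in B.
    move: lv; rewrite ev topE in_setU => /orP [//| ls].
    by move: ls; rewrite inE (negbTE ls1).
  have Av : A m' = v :\ l by rewrite vm' setU1K // hvalid.
  have El : E ((top B s1v) :\ l, l) by rewrite -ev -Av; exact: EZ.
  have [Edown chd] := desc ch1 lB ls1 El.
  exists (B :\ l); split.
    move=> x; rewrite !inE => /andP [xl xB]; rewrite imU !inE negb_or xl.
    exact: hB.
  have old : forall w, inV A i M w -> exists s1 s2,
     [/\ chain E (B :\ l) (s1 ++ s2), [set x in s1 ++ s2] = i @: (m' |: M)
       & w = top (B :\ l) s1].
    move=> w wM; have [s1 [s2 [ch hs ew]]] := hw w wM.
    exists (l :: s1), s2; split => //=.
    + by rewrite setD1K //; split => //; rewrite setD11.
    + by rewrite -(setl [::] _ hs).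
    + by rewrite setD1K.
  move=> w /inV' [-> | [-> | wM]]; last exact: old.
    exists s1v, (l :: s2v); split.
    + apply/chain_cat; split => //; rewrite topD1 // -ev /=.
      rewrite setD1K // -Av; split => //; last exact: EZ.
      by rewrite Av setD11.
    + exact: setl.
    + by rewrite topD1 // -ev.
  by rewrite -vm'; apply: old.
Qed.

Lemma grow n (A : 'I_n -> {set 'I_n}) (i : 'I_n -> 'I_n) (M : {set 'I_n}) m1 m2 :
  edges_connected A i -> m1 \in M -> m2 \notin M ->
  exists m', m' \notin M /\ exists2 v, inV A i M v & (v = A m' \/ v = i m' |: A m').
Proof.
move=> hc m1M m2M.
have hv : forall m, A m \in edge_vertices A i.
  by move=> m; rewrite /edge_vertices inE; apply/orP; left; apply/imsetP; exists m.
move: (hc _ _ (hv m1) (hv m2)) => /connectP [p hp hl].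
suff : (exists m', m' \notin M /\ exists2 v, inV A i M v & (v = A m' \/ v = i m' |: A m'))
   \/ inV A i M (last (A m1) p).
  case => //; rewrite -hl => hin.
  by exists m2; split => //; exists (A m2) => //; left.
have : inV A i M (A m1) by exists m1 => //; left.
elim: p (A m1) hp {hl} => [|y p IH] u /=; first by right.
case/andP => /existsP [m hm] hp hu.
case: (boolP (m \in M)) => mM.
  apply: IH => //; exists m => //.
  by case/orP: hm => /andP [/eqP h1 /eqP h2]; [right | left].
left; exists m; split => //; exists u => //.
by case/orP: hm => /andP [/eqP h1 /eqP h2]; [left | right].
Qed.

Theorem theorem1p4p6 (k : fieldType) (n : nat) (hn : (0 < n)%N)
    (A : 'I_n -> {set 'I_n}) (i : 'I_n -> 'I_n)
    (hvalid : forall m, i m \notin A m)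
    (hdist : injective i)
    (hconn : edges_connected A i) :
  sufficient k [set (A m, i m) | m in 'I_n].
Proof.
destruct n as [|n]; first by [].
have hall : forall k0, k0 <= n.+1 ->
    exists M : {set 'I_n.+1}, [/\ 0 < #|M|, k0 <= #|M| & Good k A i M].
  elim=> [|k0 IH] hk.
    by exists [set ord0]; rewrite cards1; split => //; apply: good1.
  have [M [h0 hk0 hG]] := IH (ltnW hk).
  case: (ltnP k0 #|M|) => hlt; first by exists M; split.
  have [m1 m1M] : exists m1, m1 \in M.
    by move: h0; rewrite card_gt0 => /set0Pn.
  have [m2 m2M] : exists m2, m2 \notin M.
    case: (pickP (fun m => m \notin M)) => [m2 h | hn0]; first by exists m2.
    have MT : M = setT by apply/setP => y; rewrite inE; move: (hn0 y) => /negbFE.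
    by move: hlt; rewrite MT cardsT card_ord => /(leq_trans hk); rewrite ltnn.
  have [m' [m'M hv]] := grow hconn m1M m2M.
  exists (m' |: M); rewrite cardsU1 m'M; split => //.
  exact: good_step.
have [M [_ hM hG]] := hall n.+1 (leqnn _).
have iT : i @: M = setT.
  by apply/eqP; rewrite eqEcard subsetT card_imset // cardsT card_ord.
have MT : M = setT by apply/eqP; rewrite eqEcard subsetT cardsT card_ord.
case: hG => B [hB hw].
have B0 : B = set0.
  apply/setP => y; rewrite inE; apply/negP => yB.
  by move: (hB y yB); rewrite iT inE.
have hin : inV A i M (A ord0) by exists ord0; [rewrite MT inE | left].
have [s1 [s2 [ch hs _]]] := hw _ hin.
rewrite B0 in ch.
set s := s1 ++ s2 in ch hs.
have /andP [us _] := chain_uniq ch.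
set s0 : seq 'I_n.+1 := [seq inord j | j <- iota 0 n.+1].
have us0 : uniq s0.
  rewrite map_inj_in_uniq ?iota_uniq // => a b; rewrite !mem_iota /= => ha hb.
  by move/(congr1 val) => /=; rewrite !inordK.
have ps : perm_eq s0 s.
  apply: uniq_perm => // y.
  rewrite (memS hs) iT in_setT; apply/mapP; exists (val y); last by rewrite inord_val.
  by rewrite mem_iota /= ltn_ord.
have size_s : size s = n.+1 by rewrite -(perm_size ps) size_map size_iota.
exists [set p in edges set0 s]; split.
  by move=> p; rewrite inE => /(chain_edges ch) [].
split.
  by move=> p; rewrite inE => /(chain_edges ch) [].
exists (fun m => nth (set0, ord0) (edges set0 s) m); split.
  by move=> m; rewrite inE mem_nth // size_edges size_s.
move=> R x hx.
rewrite Ppoly_Pch (Pch_perm hx us0 _ ps); last by apply/allP => y _; rewrite inE.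
rewrite Pch_edges; symmetry.
apply: (prod_rev (fun p => ('X - (xp x p)%:P)%R) (set0, ord0)).
by rewrite size_edges.
Qed.
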